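(* Let $(X,G)$ be a minimal topological dynamical system. If $F\in 2^X$ satisfies $V(F)=\pi_{eq}(F)$, then $F$ has the interior saturation property, i.e. $\pi_{eq}^{-1}(\mathrm{int}(\pi_{eq}(F)))\subset F$.
   Context: $G$ is an infinite countable discrete group; a tds $(X,G)$ is a compact metric space with a $G$-action by homeomorphisms; minimal means no proper nonempty closed invariant subset. $\pi_{eq}:X\to X_{eq}$ is the factor map onto the maximal equicontinuous factor, $\nu_{eq}$ the unique invariant probability measure of $(X_{eq},G)$. $2^X$ is the space of nonempty closed subsets with the Hausdorff metric $d_H$. $\mathcal X=\overline{\{\pi_{eq}^{-1}(y):y\in X_{eq}\}}\subset 2^X$; for $E\in\mathcal X$, $\pi_{\mathcal X}(E)$ is the single point $\pi_{eq}(E)$. $\mathcal X_{eq}^{\mathrm{meas}}=\{E\in\mathcal X:\nu_{eq}(\pi_{\mathcal X}(B^{\mathcal X}_\epsilon(E)))>0\ \forall\epsilon>0\}$, $B^{\mathcal X}_\epsilon(E)$ the open $d_H$-ball in $\mathcal X$. For $F\in 2^X$, $V(F)=\{y\in X_{eq}:\exists E\in\mathcal X_{eq}^{\mathrm{meas}}, E\subset F,\ \pi_{\mathcal X}(E)=y\}$. *)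

(* Defs.v *)
From HB Require Import structures.
From mathcomp Require Import all_boot all_order all_algebra.
From mathcomp Require Import all_classical all_reals all_analysis.
Set Implicit Arguments. Unset Strict Implicit. Unset Printing Implicit Defensive.
Import Order.TTheory GRing.Theory Num.Theory.
Local Open Scope classical_set_scope.
Local Open Scope ring_scope.

Record cgroup := CGroup {
  gcar :> Type;
  gmul : gcar -> gcar -> gcar;
  gone : gcar;
  ginv : gcar -> gcar;
  gmulA : forall a b c, gmul a (gmul b c) = gmul (gmul a b) c;
  gmul1 : forall a, gmul gone a = a;
  gmulV : forall a, gmul (ginv a) a = gone;
  gcountable : countable [set: gcar];
  ginfinite : infinite_set [set: gcar] }.

Section Defs.
Variable R : realType.
Variable G : cgroup.

Definition is_metric (T : topologicalType) (d : T -> T -> R) :=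
  [/\ (forall x y, 0 <= d x y), (forall x y, d x y = 0 <-> x = y),
      (forall x y, d x y = d y x),
      (forall x y z, d x z <= d x y + d y z) &
      (forall (x : T) (A : set T),
         nbhs x A <-> exists2 e, 0 < e & [set y | d x y < e] `<=` A)].

(* action of G on T by homeomorphisms (continuity of each act g together
   with the action laws makes each act g a homeomorphism) *)
Definition is_action (T : topologicalType) (act : G -> T -> T) :=
  [/\ (forall x, act (gone G) x = x),
      (forall g h x, act (gmul g h) x = act g (act h x)) &
      (forall g, continuous (act g))].

Definition is_tds (T : topologicalType) (d : T -> T -> R) (act : G -> T -> T) :=
  [/\ is_metric d, compact [set: T] & is_action act].

Definition minimal (T : topologicalType) (act : G -> T -> T) :=
  forall A : set T, closed A -> A !=set0 ->
    (forall g, act g @` A `<=` A) -> A = setT.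

Definition equicontinuous (T : topologicalType) (d : T -> T -> R)
  (act : G -> T -> T) :=
  forall e, 0 < e -> exists2 delta, 0 < delta &
    forall x y, d x y < delta -> forall g, d (act g x) (act g y) < e.

Definition factor_map (T S : topologicalType) (actT : G -> T -> T)
  (actS : G -> S -> S) (p : T -> S) :=
  [/\ continuous p, (forall s, exists t, p t = s) &
      (forall g t, p (actT g t) = actS g (p t))].

Definition max_eq_factor (T : topologicalType) (actT : G -> T -> T)
  (Y : topologicalType) (dY : Y -> Y -> R) (actY : G -> Y -> Y) (p : T -> Y) :=
  [/\ is_tds dY actY, equicontinuous dY actY, factor_map actT actY p &
      forall (Z : topologicalType) (dZ : Z -> Z -> R) (actZ : G -> Z -> Z)
             (q : T -> Z),
        is_tds dZ actZ -> equicontinuous dZ actZ -> factor_map actT actZ q ->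
        exists f : Y -> Z, factor_map actY actZ f /\ forall t, q t = f (p t)].

Definition borel_type (Y : ptopologicalType) := g_sigma_algebraType (@open Y).

Definition invariant_prob (Y : ptopologicalType) (actY : G -> Y -> Y)
  (mu : probability (borel_type Y) R) :=
  forall g (A : set (borel_type Y)), measurable A ->
    mu (actY g @^-1` A) = mu A.

Definition dist_set (T : Type) (d : T -> T -> R) (x : T) (B : set T) : R :=
  inf [set d x b | b in B].
Definition hdist (T : Type) (d : T -> T -> R) (A B : set T) : R :=
  Num.max (sup [set dist_set d a B | a in A]) (sup [set dist_set d b A | b in B]).

(* 2^X : nonempty closed subsets *)
Definition hyper (T : topologicalType) : set (set T) :=
  [set A | closed A /\ A !=set0].

Section Fibers.
Variables (X : topologicalType) (d : X -> X -> R) (Y : ptopologicalType)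
  (p : X -> Y).

(* calX = closure in (2^X, d_H) of the fibers p^-1(y) *)
Definition calX : set (set X) :=
  [set E | hyper E /\ forall e, 0 < e ->
      exists y : Y, hdist d E (p @^-1` [set y]) < e].

(* pi_calX(E) = y, i.e. p(E) is the single point y *)
Definition piX (E : set X) (y : Y) := p @` E = [set y].

(* pi_calX(B^calX_eps(E)) *)
Definition piX_ball (E : set X) (e : R) : set Y :=
  [set y | exists2 E', calX E' /\ hdist d E E' < e & piX E' y].

Definition calX_meas (nu : probability (borel_type Y) R) : set (set X) :=
  [set E | calX E /\ forall e, 0 < e ->
      (0 < nu (piX_ball E e : set (borel_type Y)))%E].

Definition Vset (nu : probability (borel_type Y) R) (F : set X) : set Y :=
  [set y | exists2 E, calX_meas nu E & E `<=` F /\ piX E y].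
End Fibers.
End Defs.

(* Main.v *)
Require Import Defs.
From HB Require Import structures.
From mathcomp Require Import all_boot all_order all_algebra.
From mathcomp Require Import all_classical all_reals all_analysis.
Import Order.TTheory GRing.Theory Num.Theory.
Local Open Scope classical_set_scope.
Local Open Scope ring_scope.

Definition pT {T : topologicalType} (x : T) : Type := T.
HB.instance Definition _ (T : topologicalType) (x : T) := Topological.on (pT x).
HB.instance Definition _ (T : topologicalType) (x : T) := isPointed.Build (pT x) x.
Lemma cc (T : topologicalType) (x : T) : compact [set: T] -> @cover_compact (pT x) [set: pT x].
Proof. move=> h. rewrite -compact_cover. exact: h. Qed.

Section Metric.
Variables (R : realType) (T : topologicalType) (d : T -> T -> R).
Hypothesis H : is_metric d.

Lemma m_ge0 x y : 0 <= d x y. Proof. by case: H. Qed.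
Lemma m_sym x y : d x y = d y x. Proof. by case: H. Qed.
Lemma m_tri x y z : d x z <= d x y + d y z. Proof. by case: H. Qed.
Lemma m_refl x : d x x = 0. Proof. by case: H => _ h _ _ _; apply/h. Qed.
Lemma m_nbhs x A : nbhs x A <-> exists2 e, 0 < e & [set y | d x y < e] `<=` A.
Proof. by case: H => _ _ _ _ h; apply: h. Qed.

Lemma ball_nbhs x e : 0 < e -> nbhs x [set y | d x y < e].
Proof. by move=> e0; apply/m_nbhs; exists e. Qed.

Lemma ball_open x e : open [set y | d x y < e].
Proof.
rewrite openE => y /= dy; apply/m_nbhs; exists (e - d x y); first by rewrite subr_gt0.
move=> z /= hz; apply: (le_lt_trans (m_tri x y z)); by rewrite -ltrBrDl.
Qed.

Lemma m_hausdorff : hausdorff_space T.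
Proof.
move=> p q cl; apply: contrapT => pq.
have dpos : 0 < d p q.
  rewrite lt_def m_ge0 andbT; apply/eqP => h0; apply: pq.
  by case: H => _ h _ _ _; apply/h.
have e0 : 0 < d p q / 2 by rewrite divr_gt0.
have [z [/= h1 h2]] := cl _ _ (ball_nbhs p _ e0) (ball_nbhs q _ e0).
have := m_tri p z q; rewrite (m_sym z q).
have := ltrD h1 h2; rewrite -splitr => h3 h4.
by move: (le_lt_trans h4 h3); rewrite ltxx.
Qed.

Lemma m_bound (x0 : T) : compact [set: T] -> exists M, forall a b, d a b <= M.
Proof.
move=> /(@cc T x0) co.
have := co nat setT (fun n => [set y | d x0 y < n%:R]) (fun n _ => ball_open x0 _).
case.
  move=> z _; exists (Num.truncn (d x0 z)).+1 => //=.
  exact: truncnS_gt.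
move=> D' _ cov.
exists ((\max_(n <- finmap.enum_fset D') n)%:R + (\max_(n <- finmap.enum_fset D') n)%:R) => a b.
have hb z : d x0 z <= (\max_(n <- finmap.enum_fset D') n)%:R.
  have [n /= nD hn] := cov z I.
  apply: (ltW (lt_le_trans hn _)); rewrite ler_nat.
  exact: (@leq_bigmax_seq _ _ xpredT (fun n => n)).
apply: (le_trans (m_tri a x0 b)); rewrite m_sym; exact: lerD.
Qed.

Lemma closure_ball x e z : 0 < e -> closure [set y | d x y < e] z -> d x z < e + e.
Proof.
move=> e0 /(_ [set y | d z y < e]); case => [|w [/= h1 h2]].
  exact: ball_nbhs.
apply: (le_lt_trans (m_tri x w z)); rewrite (m_sym w z); exact: ltrD.
Qed.

Lemma hdist_lt (M : R) (A B : set T) a eta : (forall a b, d a b <= M) ->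
  A a -> B !=set0 -> hdist d A B < eta -> exists2 b, B b & d a b < eta.
Proof.
move=> hM Aa [b0 Bb0] hlt.
have lbB a' : has_lbound [set d a' b | b in B].
  by exists 0 => _ [b _ <-]; exact: m_ge0.
have hds a' : dist_set d a' B <= M.
  apply: (le_trans _ (hM a' b0)); apply: ge_inf => //; by exists b0.
have : dist_set d a B < eta.
  apply: le_lt_trans hlt; rewrite /hdist le_max; apply/orP; left.
  apply: ub_le_sup; last by exists a.
  by exists M => _ [a' _ <-].
move/inf_lt => []; first by exists (d a b0), b0.
by move=> _ [b Bb <-] h; exists b.
Qed.

Lemma hdistC (A B : set T) : hdist d A B = hdist d B A.
Proof. by rewrite /hdist maxC. Qed.

End Metric.

Lemma closed_pre (T U : topologicalType) (f : T -> U) (C : set U) :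
  continuous f -> closed C -> closed (f @^-1` C).
Proof.
move=> fc Cc; rewrite -openC preimage_setC; apply: open_comp.
  by move=> x _; exact: fc.
by rewrite openC.
Qed.

Lemma fin_baire (Y : topologicalType) (I : eqType) (C : I -> set Y) (s : seq I) :
  forall O : set Y, open O -> O !=set0 -> (forall i, i \in s -> closed (C i)) ->
  O `<=` [set y | exists2 i, i \in s & C i y] ->
  exists i, i \in s /\ exists2 V, open V /\ V !=set0 & V `<=` C i.
Proof.
elim: s => [|a s IH] O Oo [y Oy] Cc cov.
  by have [i] := cov y Oy; rewrite in_nil.
have [[z [Oz nCz]]|] := pselect ((O `&` ~` C a) !=set0).
  have o1 : open (O `&` ~` C a).
    by apply: openI => //; rewrite openC; apply: Cc; rewrite mem_head.
  have c1 : forall i, i \in s -> closed (C i).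
    by move=> i si; apply: Cc; rewrite in_cons si orbT.
  have v1 : O `&` ~` C a `<=` [set y | exists2 i, i \in s & C i y].
    move=> w [Ow nCw]; have [i] := cov w Ow; rewrite in_cons => /orP[/eqP ->|si] Ci //.
    by exists i.
  have [i [si hi]] := IH (O `&` ~` C a) o1 (ex_intro _ z (conj Oz nCz)) c1 v1.
  by exists i; split => //; rewrite in_cons si orbT.
move=> h; exists a; split; first exact: mem_head.
exists O => //; first by split => //; exists y.
move=> w Ow; apply: contrapT => nC; apply: h; by exists w.
Qed.

Lemma gmulVr (G : cgroup) (g : G) : gmul g (ginv g) = gone G.
Proof.
set h := ginv g.
have e1 : gmul (ginv h) h = gone G by apply: gmulV.
rewrite -(gmul1 (gmul g h)) -e1 -gmulA (gmulA h g h).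
by rewrite /h gmulV gmul1 gmulV.
Qed.

Lemma semi_open (R : realType) (G : cgroup) (X : topologicalType) (dX : X -> X -> R)
  (actX : G -> X -> X) (Y : topologicalType) (dY : Y -> Y -> R) (actY : G -> Y -> Y)
  (pi : X -> Y) :
  is_metric dX -> compact [set: X] -> is_action actX -> minimal actX ->
  is_metric dY -> is_action actY -> factor_map actX actY pi ->
  forall x0 r, 0 < r -> exists2 V, open V /\ V !=set0 & V `<=` pi @` [set y | dX x0 y < r].
Proof.
move=> mX Xco [a1 aM ac] minX mY [b1 bM bc] [pic pisurj pieq] x0 r r0.
have e0 : 0 < r / 2 by rewrite divr_gt0.
pose B := [set y | dX x0 y < r / 2].
have Bo : open B := @ball_open _ _ _ mX x0 (r / 2).
pose Os := [set w | exists g, B (actX g w)].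
have Oso : open Os.
  rewrite openE => w [g Bg].
  have : nbhs w (actX g @^-1` B).
    apply: open_nbhs_nbhs; split => //; apply: open_comp => // z _; exact: ac.
  by apply: filterS => z hz; exists g.
have allO : forall w, Os w.
  move=> w; apply: contrapT => nw.
  have hT := minX (~` Os).
  have : (~` Os) x0.
    rewrite hT //.
    - by rewrite closedC.
    - by exists w.
    - move=> h _ [z nz <-] [g Bg]; apply: nz; exists (gmul g h); by rewrite aM.
  by apply; exists (gone G); rewrite a1 /B /= (@m_refl _ _ _ mX).
have [gz hgz] := choice allO.
have co := @cc X x0 Xco.
have [D' _ cov] := co X setT (fun z => actX (gz z) @^-1` B)
  (fun z _ => open_comp (fun w _ => ac (gz z) w) Bo) (fun w _ => ex_intro2 _ _ w I (hgz w)).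
pose K := closure B.
have Kcl : closed K by exact: closed_closure.
have Kc : compact K := subclosed_compact Kcl Xco (@subsetT _ K).
have piK : closed (pi @` K).
  exact: compact_closed (@m_hausdorff _ _ _ mY) (continuous_compact (continuous_subspaceT pic) Kc).
pose C := fun z => actY (gz z) @^-1` (pi @` K).
have cov' : setT `<=` [set y | exists2 i, i \in finmap.enum_fset D' & C i y].
  move=> y _; have [w <-] := pisurj y; have [i iD hi] := cov w I; exists i => //.
  rewrite /C /= -pieq; exists (actX (gz i) w) => //; exact: subset_closure.
have [z [zD [V [Vo [v Vv]] VC]]] := @fin_baire Y X C (finmap.enum_fset D') setT openT
  (ex_intro _ (pi x0) I) (fun z _ => @closed_pre _ _ _ _ (bc (gz z)) piK) cov'.
exists (actY (ginv (gz z)) @^-1` V).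
  split; first exact: open_comp (fun w _ => bc _ w) Vo.
  by exists (actY (gz z) v); rewrite /= -bM gmulV b1.
move=> y /= hy; have := VC _ hy; rewrite /C /= -bM gmulVr b1 => -[k Kk <-].
exists k => //=.
have := @closure_ball _ _ _ mX x0 _ _ e0 Kk; by rewrite -splitr.
Qed.

Theorem lemma3p6 (R : realType) (G : cgroup)
  (X : topologicalType) (dX : X -> X -> R) (actX : G -> X -> X)
  (Xeq : ptopologicalType) (dY : Xeq -> Xeq -> R) (actY : G -> Xeq -> Xeq)
  (pi_eq : X -> Xeq) (nu_eq : probability (borel_type Xeq) R) :
  is_tds dX actX -> minimal actX ->
  max_eq_factor actX dY actY pi_eq ->
  invariant_prob actY nu_eq ->
  (forall mu : probability (borel_type Xeq) R, invariant_prob actY mu ->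
     forall A : set (borel_type Xeq), measurable A -> mu A = nu_eq A) ->
  forall F : set X, hyper F ->
    Vset dX pi_eq nu_eq F = pi_eq @` F ->
    pi_eq @^-1` (pi_eq @` F)° `<=` F.
Proof.
move=> [mX Xco aX] minX [[mY Yco aY] _ fm _] _ _ F [Fcl Fne] hV x /= hx.
have [pic pisurj pieq] := fm.
apply: contrapT => nFx.
have [eps eps0 hb1] : exists2 eps, 0 < eps & [set y | dX x y < eps] `<=` ~` F.
  apply/(@m_nbhs _ _ _ mX); apply: open_nbhs_nbhs; split => //; by rewrite openC.
have [del del0 hb2] : exists2 del, 0 < del & [set y | dX x y < del] `<=` pi_eq @^-1` (pi_eq @` F).
  apply/(@m_nbhs _ _ _ mX); exact: (pic x _ hx).
pose r := Num.min eps del / 2.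
have r0 : 0 < r by rewrite divr_gt0 // lt_min eps0 del0.
have rr : r + r = Num.min eps del by rewrite /r -splitr.
have [Oq [Oo [y' Oy']] OW] := @semi_open _ _ _ _ _ _ _ _ _ mX Xco aX minX mY aY fm x r r0.
have Fy' : (pi_eq @` F) y'.
  have [w /= dw <-] := OW _ Oy'; apply: hb2 => /=.
  apply: (lt_le_trans dw); apply: (@le_trans _ _ (r + r)); first by rewrite lerDl ltW.
  by rewrite rr ge_min lexx orbT.
rewrite -hV in Fy'; case: Fy' => E [[[Ecl [z Ez]] appr] _] [EF piE].
have pz : pi_eq z = y'.
  have : (pi_eq @` E) (pi_eq z) by exists z.
  by rewrite piE.
have [eta0 eta00 hb3] : exists2 e, 0 < e & [set y | dX z y < e] `<=` pi_eq @^-1` Oq.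
  apply/(@m_nbhs _ _ _ mX); apply: (pic z); apply: open_nbhs_nbhs; split => //; by rewrite pz.
pose eta := Num.min eta0 r.
have eta_pos : 0 < eta by rewrite lt_min eta00 r0.
have [y'' hy''] := appr eta eta_pos.
have [M hM] := @m_bound _ _ _ mX z Xco.
have [w Pw dzw] := @hdist_lt _ _ _ mX M E _ z eta hM Ez (pisurj y'') hy''.
have Oy'' : Oq y''.
  rewrite -Pw; apply: hb3 => /=; apply: (lt_le_trans dzw); by rewrite ge_min lexx.
have [w' /= dw' pw'] := OW _ Oy''.
have hy2 : hdist dX (pi_eq @^-1` [set y'']) E < eta by rewrite hdistC.
have [z' Ez' dwz'] := @hdist_lt _ _ _ mX M (pi_eq @^-1` [set y'']) E w' eta hM pw'
  (ex_intro _ z Ez) hy2.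
apply: (hb1 z') (EF _ Ez') => /=.
apply: (le_lt_trans (@m_tri _ _ _ mX x w' z')).
apply: (@lt_le_trans _ _ (r + r)).
  apply: ltrD => //; apply: (lt_le_trans dwz'); by rewrite ge_min lexx orbT.
by rewrite rr ge_min lexx.
Qed.
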